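(* Let $X$ be a continuum (nonempty compact connected metric space) and $f: X \rightarrow X$ a homeomorphism. If $f$ admits a special dendrite, then $h(C(f))=\infty$, and therefore $h(2^f)=\infty$.
   Context: $2^X$ (resp. $C(X)$) is the hyperspace of nonempty closed (resp. nonempty compact connected) subsets of $X$ with the Hausdorff metric, $2^f(A)=f(A)$, $C(f)=2^f|_{C(X)}$; $h$ is topological entropy. Special dendrite: in $\mathbb{R}^2$ let $p=(-1,0)$, $q=(1,0)$, $a_0=0$, $a_n=1-\frac{1}{n+1}$, $a_{-n}=-a_n$ ($n\ge1$), $L_n=\{a_n\}\times[0,\frac{1}{|n|+1}]$, $X_0=([-1,1]\times\{0\})\cup\bigcup_{n}L_n$. Let $F:X_0\to X_0$ be a homeomorphism such that $F|_{[-1,1]\times\{0\}}$ is a homeomorphism of the segment with $F(p)=p$, $F(q)=q$, $F((a_n,0))=(a_{n+1},0)$, and $F|_{L_n}:L_n\to L_{n+1}$ is a linear homeomorphism for each $n$. $f$ admits a special dendrite if there are a closed $\Lambda\subset X$ and $k\in\mathbb{N}$ with $\Lambda$ $f^k$-invariant and $f^k|_\Lambda$ topologically conjugate to $F$. *)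

(* Defs.v *)
From HB Require Import structures.
From mathcomp Require Import all_boot all_order all_algebra.
From mathcomp Require Import all_classical all_reals all_analysis.
Set Implicit Arguments. Unset Strict Implicit. Unset Printing Implicit Defensive.
Import Order.TTheory GRing.Theory Num.Theory numFieldTopology.Exports numFieldNormedType.Exports.
Local Open Scope classical_set_scope.
Local Open Scope ring_scope.

Section Hyperspace.
Context {R : realType} {X : metricType R}.

Definition pt_set_dist (x : X) (B : set X) : R := inf [set mdist x b | b in B].

Definition hausdorff_dist (A B : set X) : R :=
  Num.max (sup [set pt_set_dist a B | a in A]) (sup [set pt_set_dist b A | b in B]).

Definition hyper2 : set (set X) := [set A | A !=set0 /\ closed A].
Definition hyperC : set (set X) := [set A | A !=set0 /\ compact A /\ connected A].

(** induced map 2^f (and C(f) is its restriction to C(X)) *)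
Definition induced_map (f : X -> X) : set X -> set X := fun A => f @` A.

End Hyperspace.

Section Entropy.
Context {R : realType} {T : Type}.
Local Open Scope ereal_scope.

Definition eln (x : \bar R) : \bar R :=
  match x with r%:E => (ln r)%:E | +oo => +oo | -oo => -oo end.

Definition separated_family (d : T -> T -> R) (g : T -> T) (K : set T)
  (n : nat) (eps : R) (m : nat) (s : 'I_m -> T) : Prop :=
  (forall i, K (s i)) /\
  (forall i j, i != j -> exists k, (k < n)%N /\ (eps < d (iter k g (s i)) (iter k g (s j)))%R).

Definition sep_number d g K n eps : \bar R :=
  ereal_sup [set (m%:R)%:E | m in [set m : nat | exists s : 'I_m -> T, separated_family d g K n eps s]].

Definition top_entropy d g K : \bar R :=
  ereal_sup [set limn_esup (fun n : nat => ((n%:R)^-1)%R%:E * eln (sep_number d g K n eps))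
            | eps in [set e : R | (0 < e)%R]].

End Entropy.

Section SpecialDendrite.
Context {R : realType}.
Local Open Scope ring_scope.

Definition dend_a (n : int) : R := (Num.sg n)%:~R * (1 - (`|n|%:~R + 1)^-1).

Definition dend_L (n : int) : set (R * R) :=
  [set p | p.1 = dend_a n /\ 0 <= p.2 <= (`|n|%:~R + 1)^-1].

Definition dend_seg : set (R * R) := [set p | p.2 = 0 /\ -1 <= p.1 <= 1].

Definition dend_X0 : set (R * R) := dend_seg `|` \bigcup_(n in [set: int]) dend_L n.

Definition homeo_on {U V : topologicalType} (A : set U) (B : set V) (h : U -> V) : Prop :=
  {within A, continuous h} /\ h @` A = B /\
  (forall x y, A x -> A y -> h x = h y -> x = y) /\
  exists g : V -> U, {within B, continuous g} /\ g @` B = A /\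
    (forall x, A x -> g (h x) = x) /\ (forall y, B y -> h (g y) = y).

Definition special_dendrite_map (F : R * R -> R * R) : Prop :=
  homeo_on dend_X0 dend_X0 F /\
  homeo_on dend_seg dend_seg F /\
  F (-1, 0) = (-1, 0) /\ F (1, 0) = (1, 0) /\
  (forall n : int, F (dend_a n, 0) = (dend_a (n + 1), 0)) /\
  (forall n : int, homeo_on (dend_L n) (dend_L (n + 1)) F /\
     exists alpha beta : R, forall p, dend_L n p ->
       F p = (dend_a (n + 1), alpha * p.2 + beta)).

Definition admits_special_dendrite {X : metricType R} (f : X -> X)
  (F : R * R -> R * R) : Prop :=
  exists (Lam : set X) (k : nat), closed Lam /\ (0 < k)%N /\
    (iter k f) @` Lam `<=` Lam /\
    exists phi : X -> R * R, homeo_on Lam dend_X0 phi /\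
      forall x, Lam x -> phi (iter k f x) = F (phi x).

End SpecialDendrite.

(* Main.v *)
Require Import Defs.
From HB Require Import structures.
From mathcomp Require Import all_boot all_order all_algebra.
From mathcomp Require Import all_classical all_reals all_analysis.
From mathcomp Require Import lra ring zify.
Import Order.TTheory GRing.Theory Num.Theory numFieldTopology.Exports numFieldNormedType.Exports.
Local Open Scope classical_set_scope.
Local Open Scope ring_scope.
Set Implicit Arguments. Unset Strict Implicit. Unset Printing Implicit Defensive.

Section Haus.
Context {R : realType} {X : metricType R}.

Lemma pt_set_dist_ge (x : X) (B : set X) d : B !=set0 ->
  (forall b, B b -> d <= mdist x b) -> d <= pt_set_dist x B.
Proof.
move=> [b0 Bb0] H; rewrite /pt_set_dist; apply: lb_le_inf.
  by exists (mdist x b0), b0.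
by move=> _ [b Bb <-]; apply: H.
Qed.

Lemma pt_set_dist_le (x : X) (B : set X) b : B b -> pt_set_dist x B <= mdist x b.
Proof.
move=> Bb; rewrite /pt_set_dist; apply: ge_inf; last by exists b.
by exists 0 => _ [c _ <-]; apply: mdist_ge0.
Qed.

Lemma haus_ge (M : R) (HM : forall a b : X, mdist a b <= M) (A B : set X) x d :
  A x -> B !=set0 -> (forall b, B b -> d <= mdist x b) -> d <= hausdorff_dist A B.
Proof.
move=> Ax B0 H; rewrite /hausdorff_dist le_max; apply/orP; left.
apply: le_trans (pt_set_dist_ge B0 H) _.
apply: ub_le_sup; last by exists x.
case: B0 => b Bb.
by exists M => _ [a _ <-]; apply: le_trans (pt_set_dist_le a Bb) _.
Qed.

Lemma haus_sym (A B : set X) : hausdorff_dist A B = hausdorff_dist B A.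
Proof. by rewrite /hausdorff_dist maxC. Qed.

Lemma mdist_cont (x0 : X) : continuous (fun y : X => (mdist x0 y : R^o)).
Proof.
move=> y; apply/cvgrPdist_lt => e e0.
near=> z.
have yz : mdist y z < e.
  by near: z; apply/nbhs_ballP; exists e => // w; rewrite ballEmdist.
apply: le_lt_trans yz; rewrite ler_norml; apply/andP; split.
  have := metric_triangle x0 y z; lra.
have := metric_triangle x0 z y; rewrite (metric_sym z y); lra.
Unshelve. all: by end_near.
Qed.

Lemma compact_mdist_bounded : compact [set: X] ->
  exists M : R, forall a b : X, mdist a b <= M.
Proof.
move=> cX.
have [x0|] := pselect (exists x : X, True); last first.
  move=> nX; exists 0 => a; by exfalso; apply: nX; exists a.
case: x0 => x0 _.
have := continuous_compact (continuous_subspaceT (mdist_cont (x0:=x0))) cX.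
move=> /compact_bounded [M [_ HM]].
exists ((`|M| + 1) *+ 2) => a b.
apply: le_trans (metric_triangle a x0 b) _.
rewrite metric_sym mulr2n lerD //.
  have := HM (`|M| + 1); rewrite (le_lt_trans (ler_norm M)) ?ltrDl // => /(_ isT (mdist x0 a)).
  by move=> H; apply: le_trans (ler_norm _) (H _); exists a.
have := HM (`|M| + 1); rewrite (le_lt_trans (ler_norm M)) ?ltrDl // => /(_ isT (mdist x0 b)).
by move=> H; apply: le_trans (ler_norm _) (H _); exists b.
Qed.

End Haus.

Section Dend.
Context {R : realType}.

Definition dh (n : int) : R := (`|n|%:~R + 1)^-1.

Lemma dh_gt0 n : 0 < dh n.
Proof. by rewrite /dh invr_gt0 ltr_wpDl // ler0z. Qed.

Lemma dh0 : dh 0 = 1.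
Proof. by rewrite /dh normr0 add0r invr1. Qed.

Lemma dend_a0 : dend_a 0 = 0 :> R.
Proof. by rewrite /dend_a sgr0 mul0r. Qed.

Lemma dh_le1 n : dh n <= 1.
Proof.
have h : 0 <= `|n|%:~R :> R by rewrite ler0z.
by rewrite /dh invf_le1; lra.
Qed.

Lemma dh_le_half n : n != 0 -> dh n <= 2^-1.
Proof.
move=> n0; rewrite /dh lef_pV2 ?posrE ?ltr_wpDl ?ler0z //.
have : 1 <= `|n|%:~R :> R.
  by rewrite ler1z; have : 0 < `|n| by rewrite normr_gt0.
by lra.
Qed.

Lemma dend_a_abs n : `|dend_a n| = (n != 0)%:R * (1 - dh n) :> R.
Proof.
rewrite /dend_a normrM -/(dh n).
have h1 : 0 <= 1 - dh n by rewrite subr_ge0 dh_le1.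
rewrite (ger0_norm h1); congr (_ * _).
case: (ltrgt0P n) => [n0|n0|->]; rewrite ?sgr0 ?normr0 //.
- by rewrite gtr0_sg // normr1.
- by rewrite ltr0_sg // mulrNz normrN normr1.
Qed.

Lemma dend_a_far n : n != 0 -> 2^-1 <= `|dend_a n| :> R.
Proof. by move=> n0; rewrite dend_a_abs n0 mul1r; have := dh_le_half n0; lra. Qed.

Lemma dend_a_in n : -1 <= (dend_a n : R) <= 1.
Proof.
rewrite -ler_norml dend_a_abs; have := dh_gt0 n; have := dh_le1 n.
by case: (n != 0); rewrite /= ?mul1r ?mul0r; lra.
Qed.

Variable F : R * R -> R * R.
Hypothesis HF : special_dendrite_map F.

Lemma F_arm n s : 0 <= s <= 1 ->
  F (dend_a n, s * dh n) = (dend_a (n + 1), s * dh (n + 1)).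
Proof.
move=> /andP[s0 s1].
case: HF => _ [_ [_ [_ [Fa HL]]]].
have [[_ [img _]] [al [be Hlin]]] := HL n.
have Ln0 : @dend_L R n (dend_a n, 0) by split => //=; rewrite lexx ltW // dh_gt0.
have be0 : be = 0.
  have := Hlin _ Ln0; rewrite Fa /= mulr0 add0r => -[->] //.
subst be.
have Ltop : @dend_L R n (dend_a n, dh n) by split => //=; rewrite lexx ltW // dh_gt0.
have top : al * dh n <= dh (n + 1).
  have : dend_L (n + 1) (F (dend_a n, dh n)) by rewrite -img; exists (dend_a n, dh n).
  by rewrite Hlin // /= addr0 => -[_ /andP[]].
have Ltop1 : @dend_L R (n + 1) (dend_a (n + 1), dh (n + 1)).
  by split => //=; rewrite lexx ltW // dh_gt0.
rewrite -img in Ltop1; case: Ltop1 => p Lp Fp.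
rewrite Hlin // addr0 in Fp; case: Fp => Fp.
case: Lp => _ /andP[p0 p1].
have d1 := dh_gt0 (n + 1).
have al0 : 0 < al.
  rewrite ltNge; apply/negP => al0.
  have : al * p.2 <= 0 by nra.
  by lra.
have e : al * dh n = dh (n + 1).
  have p1' : p.2 <= dh n by [].
  have := mulr_ge0 (ltW al0) ((ltac:(by rewrite subr_ge0) : 0 <= dh n - p.2)).
  by lra.
have Ls : @dend_L R n (dend_a n, s * dh n).
  by split => //=; have := dh_gt0 n; nra.
by rewrite Hlin //= addr0 -e mulrCA.
Qed.

Lemma F_iter_arm n s (j : nat) : 0 <= s <= 1 ->
  iter j F (dend_a n, s * dh n) = (dend_a (n + j%:Z), s * dh (n + j%:Z)).
Proof.
move=> s01; elim: j => [|j IH]; first by rewrite addr0.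
by rewrite iterS IH F_arm // -addn1 PoszD addrA.
Qed.

Lemma F_seg p : dend_seg p -> dend_seg (F p).
Proof.
case: HF => _ [[_ [img _]] _] sp; rewrite -img; by exists p.
Qed.

Lemma F_X0 p : dend_X0 p -> dend_X0 (F p).
Proof.
case: HF => [[_ [img _]] _] sp; rewrite -img; by exists p.
Qed.

Lemma F_iter_seg j p : dend_seg p -> dend_seg (iter j F p).
Proof. by move=> sp; elim: j => // j IH; rewrite iterS; apply: F_seg. Qed.

Lemma F_iter_X0 j p : dend_X0 p -> dend_X0 (iter j F p).
Proof. by move=> sp; elim: j => // j IH; rewrite iterS; apply: F_X0. Qed.

End Dend.

Section Sets.
Context {R : realType}.

Lemma in_cc (a b x : R) : (`[a, b]%classic x) = (a <= x <= b).
Proof. by rewrite /= in_itv. Qed.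

Definition segm : set (R * R) := (fun x : R => (x, 0)) @` `[-1, 1].
Definition arm (n : int) (c : R) : set (R * R) :=
  (fun s : R => (dend_a n, s * dh n)) @` `[0, c].

Definition piece (N q : nat) (t : {ffun 'I_q -> 'I_N.+1}) (o : option 'I_q) :
  set (R * R) :=
  match o with None => segm | Some i => segm `|` arm (- (i : nat)%:Z) ((t i)%:R / N%:R) end.

Definition Bt (N q : nat) (t : {ffun 'I_q -> 'I_N.+1}) : set (R * R) :=
  \bigcup_(o in [set: option 'I_q]) piece t o.

Lemma cont_h : continuous (fun x : R => (x, 0 : R)).
Proof. by move=> x; apply: (@cvg_pair _ _ _ _ (nbhs x) (nbhs (0:R))); [exact: cvg_id | exact: cvg_cst]. Qed.

Lemma cont_v (a d : R) : continuous (fun s : R => (a, s * d)).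
Proof.
move=> x; apply: (@cvg_pair _ _ _ _ (nbhs a) (nbhs (x * d))); first exact: cvg_cst.
by apply: cvgMl; exact: cvg_id.
Qed.

Lemma segm_compact : compact segm.
Proof. by apply: continuous_compact; [apply: continuous_subspaceT; exact: cont_h | exact: segment_compact]. Qed.

Lemma segm_connected : connected segm.
Proof. by apply: connected_continuous_connected; [exact: segment_connected | apply: continuous_subspaceT; exact: cont_h]. Qed.

Lemma arm_compact n c : compact (arm n c).
Proof. by apply: continuous_compact; [apply: continuous_subspaceT; exact: cont_v | exact: segment_compact]. Qed.

Lemma arm_connected n c : connected (arm n c).
Proof. by apply: connected_continuous_connected; [exact: segment_connected | apply: continuous_subspaceT; exact: cont_v]. Qed.

Lemma segm_seg : segm `<=` dend_seg.
Proof.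
move=> p [x] /= xin <-; move: xin; rewrite in_itv /= => /andP[x1 x2].
by split => //=; rewrite x1.
Qed.

Variables (N q : nat) (t : {ffun 'I_q -> 'I_N.+1}).
Hypothesis N0 : (0 < N)%N.

Lemma tN (i : 'I_q) : 0 <= ((t i)%:R / N%:R : R) <= 1.
Proof.
have Np : 0 < N%:R :> R by rewrite ltr0n.
rewrite divr_ge0 ?ler0n //= ler_pdivrMr // mul1r ler_nat.
by have := ltn_ord (t i); rewrite ltnS.
Qed.

Lemma piece_X0 o : piece t o `<=` dend_X0.
Proof.
case: o => [i|] p /=; last by move/segm_seg; left.
case=> [/segm_seg|]; first by left.
case=> s /= sin <-; move: sin; rewrite in_itv /= => /andP[s0 s1]; right.
exists (- (i : nat)%:Z) => //; split => //=.
have := tN i => /andP[_ t1].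
have D0 := @dh_gt0 R (- (i : nat)%:Z).
rewrite -/(dh _); apply/andP; split; nra.
Qed.

Lemma Bt_X0 : Bt t `<=` dend_X0.
Proof. by move=> p [ o _]; apply: piece_X0. Qed.

Lemma Bt00 : Bt t (0, 0).
Proof.
exists None => //=; exists 0 => //; rewrite in_cc; apply/andP; split; lra.
Qed.

Lemma Bt_arm (i : 'I_q) :
  Bt t (dend_a (- (i : nat)%:Z), (t i)%:R / N%:R * dh (- (i : nat)%:Z)).
Proof.
exists (Some i) => //=; right; exists ((t i)%:R / N%:R) => //.
by rewrite in_cc; have := tN i => /andP[-> _]; rewrite lexx.
Qed.

Lemma Bt_cases p : Bt t p -> dend_seg p \/
  exists (i : 'I_q) (s : R), 0 <= s <= (t i)%:R / N%:R /\
     p = (dend_a (- (i : nat)%:Z), s * dh (- (i : nat)%:Z)).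
Proof.
case=> -[i|] _ /=; last by move/segm_seg; left.
case=> [/segm_seg|]; first by left.
case=> s /= si <-; move: si; rewrite in_itv /= => si; right; by exists i, s.
Qed.

Lemma Bt_compact : compact (Bt t).
Proof.
rewrite /Bt (_ : [set: option 'I_q] = [set` enum (@predT (option 'I_q))]); last first.
  by apply/seteqP; split => o //= _; rewrite mem_enum.
rewrite bigcup_seq; apply: bigsetU_compact => -[i|] _ /=.
  by apply: compactU; [exact: segm_compact | exact: arm_compact].
exact: segm_compact.
Qed.

Lemma Bt_connected : connected (Bt t).
Proof.
apply: bigcup_connected.
  exists (0, 0) => -[i|] _ /=; [left|]; exists 0 => //; rewrite in_cc; apply/andP; split; lra.
move=> [i|] _ /=; last exact: segm_connected.
apply: connectedU; [|exact: segm_connected|exact: arm_connected].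
exists (dend_a (- (i : nat)%:Z), 0); split.
  by exists (dend_a (- (i : nat)%:Z)) => //; rewrite in_cc dend_a_in.
exists 0; last by rewrite mul0r.
by rewrite in_cc lexx; have := tN i => /andP[].
Qed.

End Sets.

Lemma min_delta {R : realType} (n : nat) (P : nat -> R -> Prop) :
  (forall v d d', P v d -> 0 < d' <= d -> P v d') ->
  (forall v, (v < n)%N -> exists2 d, 0 < d & P v d) ->
  exists2 d, 0 < d & forall v, (v < n)%N -> P v d.
Proof.
move=> Pmono; elim: n => [|n IH] H; first by exists 1.
have [d1 d10 H1] := IH (fun v vn => H v (ltnW vn)).
have [d2 d20 H2] := H n (ltnSn n).
exists (Num.min d1 d2); first by rewrite lt_min d10 d20.
move=> v; rewrite ltnS leq_eqVlt => /orP[/eqP ->|vn].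
  by apply: Pmono H2 _; rewrite lt_min d10 d20 /= ge_min lexx orbT.
by apply: Pmono (H1 _ vn) _; rewrite lt_min d10 d20 /= ge_min lexx.
Qed.

Section Core.
Context {R : realType} {X : metricType R} (f : X -> X) (F : R * R -> R * R)
  (Lam : set X) (k : nat) (phi : X -> R * R) (g : R * R -> X).
Hypothesis HF : special_dendrite_map F.
Hypothesis Hk : (0 < k)%N.
Hypothesis Hinv : (iter k f) @` Lam `<=` Lam.
Hypothesis Hconj : forall x, Lam x -> phi (iter k f x) = F (phi x).
Hypothesis phicont : {within Lam, continuous phi}.
Hypothesis gcont : {within dend_X0, continuous g}.
Hypothesis gX0 : g @` dend_X0 = Lam.
Hypothesis gphi : forall x, Lam x -> g (phi x) = x.
Hypothesis phig : forall y, dend_X0 y -> phi (g y) = y.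

Lemma g_Lam y : dend_X0 y -> Lam (g y).
Proof. by move=> y0; rewrite -gX0; exists y. Qed.

Lemma conj_step y : dend_X0 y -> iter k f (g y) = g (F y).
Proof.
move=> y0; have Lx := g_Lam y0.
have L' : Lam (iter k f (g y)) by apply: Hinv; exists (g y).
by rewrite -(gphi L') Hconj // phig.
Qed.

Lemma conj_iter m y : dend_X0 y -> iter (k * m) f (g y) = g (iter m F y).
Proof.
move=> y0; elim: m => [|m IH]; first by rewrite muln0.
by rewrite mulnS iterD IH conj_step ?iterS //; apply: F_iter_X0.
Qed.

Lemma induced_iter n A : iter n (induced_map f) A = iter n f @` A.
Proof.
elim: n => [|n IH] /=; first by rewrite image_id.
rewrite IH /induced_map; apply/seteqP; split => z /=.
  by case=> _ [x Ax <-] <-; exists x.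
by case=> x Ax <-; exists (iter n f x) => //; exists x.
Qed.

Lemma phi_delta x c : Lam x -> 0 < c ->
  exists2 d, 0 < d & forall y, Lam y -> mdist x y < d -> ball (phi x) c (phi y).
Proof.
move=> Lx c0.
have := (proj1 (subspace_continuousP _ _) phicont) x Lx.
move=> /(_ _ (nbhsx_ballx (phi x) c c0)).
rewrite /= nbhs_simpl /= => /nbhs_ballP [d d0 Hd].
exists d => // y Ly xy; apply: Hd => //; by rewrite ballEmdist.
Qed.

End Core.


Section Core2.
Context {R : realType} {X : metricType R} (f : X -> X) (F : R * R -> R * R)
  (Lam : set X) (k : nat) (phi : X -> R * R) (g : R * R -> X).
Hypothesis HF : special_dendrite_map F.
Hypothesis Hk : (0 < k)%N.
Hypothesis Hinv : (iter k f) @` Lam `<=` Lam.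
Hypothesis Hconj : forall x, Lam x -> phi (iter k f x) = F (phi x).
Hypothesis phicont : {within Lam, continuous phi}.
Hypothesis gcont : {within dend_X0, continuous g}.
Hypothesis gX0 : g @` dend_X0 = Lam.
Hypothesis gphi : forall x, Lam x -> g (phi x) = x.
Hypothesis phig : forall y, dend_X0 y -> phi (g y) = y.
Variable M : R.
Hypothesis HM : forall a b : X, mdist a b <= M.
Variable N : nat.
Hypothesis N0 : (0 < N)%N.

Let c : R := (2 * N%:R)^-1.
Let xv (v : nat) : X := g (0, v%:R / N%:R).

Lemma X0_0v v : (v <= N)%N -> dend_X0 (0, v%:R / N%:R : R).
Proof.
move=> vN; right; exists 0 => //; split => /=; first by rewrite dend_a0.
rewrite -/(dh 0) dh0 divr_ge0 ?ler0n //= ler_pdivrMr ?ltr0n // mul1r ler_nat.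
exact: vN.
Qed.

Lemma c_gt0 : 0 < c.
Proof. by rewrite /c invr_gt0 mulr_gt0 ?ltr0n. Qed.

Lemma delta_ex : exists2 d, 0 < d & forall v, (v < N.+1)%N ->
  forall y, Lam y -> mdist (xv v) y < d -> ball (phi (xv v)) c (phi y).
Proof.
apply: min_delta.
  move=> v d d' H /andP[_ dd'] y Ly h; apply: H => //; exact: lt_le_trans h dd'.
move=> v vN; apply: phi_delta => //; last exact: c_gt0.
apply: (g_Lam gX0); apply: X0_0v; by rewrite -ltnS.
Qed.

Lemma sep_pair d (d0 : 0 < d)
  (Hd : forall v, (v < N.+1)%N ->
     forall y, Lam y -> mdist (xv v) y < d -> ball (phi (xv v)) c (phi y))
  q (t t' : {ffun 'I_q -> 'I_N.+1}) (p : 'I_q) : (t' p < t p)%N ->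
  d <= hausdorff_dist (iter (k * p) (induced_map f) (g @` Bt t))
                      (iter (k * p) (induced_map f) (g @` Bt t')).
Proof.
move=> tt'; rewrite !induced_iter.
have CI := conj_iter HF Hinv Hconj gX0 gphi phig.
set v := nat_of_ord (t p).
have vN : (v < N.+1)%N := ltn_ord _.
have tp01 := tN (R := R) t N0 p.
have Hy0 : iter p F (dend_a (- (p : nat)%:Z), (t p)%:R / N%:R * dh (- (p : nat)%:Z))
    = (0, v%:R / N%:R).
  have e0 : - (p : nat)%:Z + (p : nat)%:Z = 0 := addNr _.
  by rewrite F_iter_arm // e0 dend_a0 dh0 mulr1.
have Ax : (iter (k * p) f @` (g @` Bt t)) (xv v).
  exists (g (dend_a (- (p : nat)%:Z), (t p)%:R / N%:R * dh (- (p : nat)%:Z))).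
    by exists (dend_a (- (p : nat)%:Z), (t p)%:R / N%:R * dh (- (p : nat)%:Z)) => //; exact: Bt_arm.
  by rewrite CI ?Hy0 //; apply: (Bt_X0 N0); exact: Bt_arm.
apply: (haus_ge HM Ax).
  exists (iter (k * p) f (g (0, 0))); exists (g (0, 0)) => //.
  by exists (0, 0) => //; exact: Bt00.
move=> _ [_ [y By <-] <-].
have y0 : dend_X0 y := Bt_X0 N0 By.
rewrite CI //.
have z0 : dend_X0 (iter p F y) by apply: F_iter_X0.
rewrite leNgt; apply/negP => hb.
have := Hd v vN _ (g_Lam gX0 z0) hb.
rewrite phig // /xv phig; last by apply: X0_0v; rewrite -ltnS.
case => /= h1 h2; move: h1 h2; rewrite /ball /= => h1 h2.
have Np : 0 < N%:R :> R by rewrite ltr0n.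
set w := (N%:R : R)^-1.
have w0 : 0 < w by rewrite invr_gt0.
have Nn0 : N%:R != 0 :> R by rewrite gt_eqF.
have cw : c * 2 = w.
  by rewrite /c /w; field.
have vt : (t' p)%:R + 1 <= v%:R :> R by rewrite natr1 ler_nat.
have t'0 : 0 <= (t' p)%:R :> R by rewrite ler0n.
case: (Bt_cases By) => [ys | [i [s [si ye]]]].
  have := F_iter_seg HF p ys => -[z2 _].
  move: h2; rewrite z2 subr0 => h2.
  have : v%:R * w < c by apply: le_lt_trans h2; rewrite ler_norm.
  by nra.
have s01 : 0 <= s <= 1.
  have := tN (R := R) t' N0 i => /andP[_ ti1]; case/andP: si => si0 si1.
  by rewrite si0 /=; apply: le_trans si1 ti1.
move: h1 h2; rewrite ye F_iter_arm //= => h1 h2.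
case: (eqVneq i p) => [eip|ip].
  move: h2 si; rewrite eip addNr dh0 mulr1 => h2 /andP[s0 s1].
  have : v%:R * w - s < c by apply: le_lt_trans h2; rewrite ler_norm.
  rewrite -/w in s1.
  have : (t' p)%:R * w + w <= v%:R * w by nra.
  by nra.
have nz : - (i : nat)%:Z + (p : nat)%:Z != 0.
  rewrite addrC subr_eq0; apply: contra ip => /eqP e.
  by rewrite -val_eqE /= eq_sym; move: e => [->].
have := dend_a_far (R := R) nz.
move: h1; rewrite sub0r normrN => h1.
have c2 : c <= 2^-1.
  have : 1 <= N%:R :> R by rewrite ler1n.
  by move=> N1; rewrite /c lef_pV2 ?posrE ?mulr_gt0 ?ltr0n //; nra.
by lra.
Qed.

Lemma core_sep d (d0 : 0 < d)
  (Hd : forall v, (v < N.+1)%N ->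
     forall y, Lam y -> mdist (xv v) y < d -> ball (phi (xv v)) c (phi y)) q :
  exists s : 'I_#|{: {ffun 'I_q -> 'I_N.+1}}| -> set X, forall n, (k * q <= n)%N ->
    separated_family hausdorff_dist (induced_map f) hyperC n (d / 2) s.
Proof.
exists (fun i => g @` Bt (enum_val i)) => n kqn; split.
  move=> i; split; first by exists (g (0, 0)), (0, 0) => //; exact: Bt00.
  split.
    apply: continuous_compact; last exact: Bt_compact.
    by apply: continuous_subspaceW gcont; exact: Bt_X0.
  apply: connected_continuous_connected; first exact: Bt_connected.
  by apply: continuous_subspaceW gcont; exact: Bt_X0.
move=> i j ij.
set t := enum_val i; set t' := enum_val j.
have tt' : t != t'.
  by apply: contra ij => /eqP e; apply/eqP; exact: enum_val_inj e.
have : ~~ [forall p, t p == t' p].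
  by apply: contra tt' => /forallP H; apply/eqP/ffunP => p; apply/eqP; exact: H.
rewrite negb_forall => /existsP [p tp].
exists (k * p)%N; split.
  by apply: leq_trans kqn; rewrite ltn_pmul2l.
have d2 : d / 2 < d by lra.
apply: lt_le_trans d2 _.
case: (ltngtP (t' p) (t p)) => h.
- exact: sep_pair.
- by rewrite haus_sym; apply: sep_pair.
- by exfalso; move: tp; rewrite (val_inj h) eqxx.
Qed.

End Core2.

Section Ent.
Context {R : realType} {T : Type}.

Lemma sep_number_ge (d : T -> T -> R) g K n eps m (s : 'I_m -> T) :
  separated_family d g K n eps s -> ((m%:R)%:E <= sep_number d g K n eps)%E.
Proof. by move=> H; apply: ereal_sup_ubound; exists m => //; exists s. Qed.

Lemma sep_mono (d : T -> T -> R) g K K' n eps m (s : 'I_m -> T) :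
  K `<=` K' -> separated_family d g K n eps s -> separated_family d g K' n eps s.
Proof. by move=> KK [H1 H2]; split => // i; apply: KK. Qed.

Lemma arith_bound (n k q : nat) (x r : R) : (0 < k)%N -> (k <= n)%N ->
  q = (n %/ k)%N -> 0 <= x -> x *+ q <= r ->
  x / (2 * k%:R) <= n%:R^-1 * r.
Proof.
move=> k0 kn -> x0 xr.
have n0 : (0 < n)%N by apply: leq_trans kn.
have nr : 0 < n%:R :> R by rewrite ltr0n.
have kr : 0 < 2 * k%:R :> R by rewrite mulr_gt0 ?ltr0n.
have q1 : (1 <= n %/ k)%N by rewrite divn_gt0.
have n2 : (n <= 2 * k * (n %/ k))%N.
  have e := divn_eq n k; have m := ltn_pmod n k0.
  move: e m q1; move: (n %/ k)%N (n %% k)%N => Q Rm e m q1.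
  have : (Rm <= k * Q)%N by apply: leq_trans (ltnW m) _; rewrite leq_pmulr.
  by lia.
have n2r : n%:R <= 2 * k%:R * (n %/ k)%:R :> R by rewrite -natrM -natrM ler_nat.
rewrite [n%:R^-1 * r]mulrC ler_pdivlMr // mulrAC ler_pdivrMr //.
apply: le_trans (_ : x * (2 * k%:R * (n %/ k)%:R) <= _).
  by apply: ler_wpM2l.
rewrite [_ * (n %/ k)%:R]mulrC mulrA.
by apply: ler_wpM2r; [apply: ltW | rewrite mulr_natr].
Qed.

Lemma entropy_ge (d : T -> T -> R) g K (k : nat) (Hk : (0 < k)%N) (B : nat)
  (B1 : (1 <= B)%N) eps (eps0 : 0 < eps) :
  (forall q, exists m, (B ^ q <= m)%N /\ exists s : 'I_m -> T,
     forall n, (k * q <= n)%N -> separated_family d g K n eps s) ->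
  ((ln B%:R / (2 * k%:R))%:E <= top_entropy d g K)%E.
Proof.
move=> H.
apply: le_trans (ereal_sup_ubound _); last by exists eps.
rewrite limn_esup_lim; apply: lime_ge; first exact: is_cvg_esups.
near=> n.
apply: le_trans (ereal_sup_ubound _); last by exists n => /=.
have kn : (k <= n)%N by near: n; exists k.
have [m [Bm [s Hs]]] := H (n %/ k)%N.
have := sep_number_ge (Hs n _); rewrite mulnC leq_divM => /(_ isT).
have Bp : 0 < B%:R :> R by rewrite ltr0n.
have lnB : 0 <= ln B%:R :> R by apply: ln_ge0; rewrite ler1n.
case: (sep_number d g K n eps) => [r||] //= mr.
- have mr' : m%:R <= r by rewrite -lee_fin.
  have m0 : 0 < m%:R :> R by rewrite ltr0n; apply: leq_trans Bm; rewrite expn_gt0 B1.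
  rewrite lee_fin; apply: arith_bound => //.
  have : ln ((B ^ (n %/ k))%:R) <= ln r :> R.
    rewrite ler_ln ?posrE //; last by apply: lt_le_trans mr'.
      by apply: le_trans mr'; rewrite ler_nat.
    by rewrite ltr0n expn_gt0 B1.
  by rewrite natrX lnXn.
- rewrite gt0_muley ?leey // lte_fin invr_gt0 ltr0n.
  by apply: leq_trans kn.
Unshelve. all: by end_near.
Qed.

End Ent.

Lemma ereal_pinfty_of {R : realType} (x : \bar R) :
  (forall M : R, 0 < M -> (M%:E <= x)%E) -> x = +oo%E.
Proof.
case: x => [r||] // H.
  have := H (`|r| + 1)%R; rewrite ltr_wpDl ?normr_ge0 // lee_fin => /(_ isT).
  by move=> h; exfalso; have := ler_norm r; lra.
by have := H 1%R (@ltr01 R).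
Qed.

Unset Implicit Arguments.
Set Strict Implicit.

Theorem theorem5p19 (R : realType) (X : metricType R) (f : X -> X)
  (F : R * R -> R * R) :
  [set: X] !=set0 -> compact [set: X] -> connected [set: X] ->
  homeo_on [set: X] [set: X] f ->
  special_dendrite_map F ->
  admits_special_dendrite f F ->
  top_entropy hausdorff_dist (induced_map f) hyperC = +oo%E /\
  top_entropy hausdorff_dist (induced_map f) hyper2 = +oo%E.
Proof.
move=> _ cX _ _ HF [Lam [k [_ [Hk [Hinv [phi [[phicont [_ [_ [g [gcont [gX0 [gphi phig]]]]]]] Hconj]]]]]]].
have [M HM] := compact_mdist_bounded cX.
suff H : forall K, hyperC `<=` K ->
    top_entropy hausdorff_dist (induced_map f) K = +oo%E.
  split; apply: H => // A [A0 [cA conA]]; split => //.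
  by apply: compact_closed => //; exact: metric_hausdorff.
move=> K CK; apply: ereal_pinfty_of => Mr Mr0.
set N := (Num.truncn (expR (Mr * (2 * k%:R)))).+1.
have N0 : (0 < N)%N by [].
have [d d0 Hd] := delta_ex phicont gX0 N0.
have kr : 0 < 2 * k%:R :> R by rewrite mulr_gt0 ?ltr0n.
apply: le_trans (entropy_ge (B := N.+1) Hk _ (_ : 0 < d / 2) _).
- rewrite lee_fin ler_pdivlMr //.
  rewrite -[X in X <= _]expRK ler_ln ?posrE ?expR_gt0 ?ltr0n //.
  apply: le_trans (ltW (truncnS_gt _)) _.
  by rewrite ler_nat.
- by [].
- by lra.
move=> q; exists #|{: {ffun 'I_q -> 'I_N.+1}}|; split.
  by rewrite card_ffun !card_ord.
have [s Hs] := core_sep HF Hk Hinv Hconj gcont gX0 gphi phig HM N0 d0 Hd q.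
by exists s => n kn; apply: sep_mono CK (Hs n kn).
Qed.
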